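(* For any $k, J \in \mathbb{N}$ with $2ek < J$, and for each choice of activation $\sigma \in \{\exp, \sinh, \sin\}$, there exists a shallow (one-hidden-layer) neural network $f^{(k)} : \mathbb{C} \to \mathbb{C}$ using activation $\sigma$, with $O(J)$ neurons and weights of size $O(k)$, such that $$\sup_{|\xi| \leq 2} \left| f^{(k)}(\xi) - \xi^k \right| \leq 2 \left( \frac{2ek}{J} \right)^J.$$
   Context: A shallow neural network with activation $\sigma$ here means a function of the form $\xi \mapsto \sum_{j} a_j \sigma(w_j \xi + b_j)$ with complex weights $a_j, w_j, b_j$; the number of neurons is the number of summands. *)

(* Defs.v *)
From Stdlib Require Import Reals List.
From Coquelicot Require Import Coquelicot.
Open Scope R_scope.

Definition Cexp (z : C) : C :=
  (exp (Re z) * cos (Im z), exp (Re z) * sin (Im z)).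
Definition Csinh (z : C) : C := Cdiv (Cminus (Cexp z) (Cexp (Copp z))) (RtoC 2).
Definition Csin (z : C) : C :=
  Cdiv (Cminus (Cexp (Cmult Ci z)) (Cexp (Copp (Cmult Ci z)))) (Cmult (RtoC 2) Ci).

Inductive activation := Act_exp | Act_sinh | Act_sin.
Definition act (s : activation) : C -> C :=
  match s with Act_exp => Cexp | Act_sinh => Csinh | Act_sin => Csin end.

(* A shallow network is a list of neurons (a_j, w_j, b_j);
   it computes xi |-> sum_j a_j * sigma(w_j * xi + b_j).
   The number of neurons is the length of the list. *)
Definition shallow_net (sigma : C -> C) (nn : list (C * C * C)) (xi : C) : C :=
  fold_right (fun (n : C * C * C) (acc : C) =>
    Cplus (Cmult (fst (fst n)) (sigma (Cplus (Cmult (snd (fst n)) xi) (snd n)))) acc)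
    (RtoC 0) nn.

Definition weights_bounded (nn : list (C * C * C)) (M : R) : Prop :=
  List.Forall (fun n : C * C * C =>
    Cmod (fst (fst n)) <= M /\ Cmod (snd (fst n)) <= M /\ Cmod (snd n) <= M) nn.

(* Main.v *)
Require Import Defs.
From Stdlib Require Import Reals List.
From Coquelicot Require Import Coquelicot.
From Stdlib Require Import Lia Lra.
Open Scope R_scope.

Lemma pow_n_Cpow (x : C) n : pow_n x n = Cpow x n.
Proof. induction n; simpl; [reflexivity|]. now rewrite IHn. Qed.

Ltac Csplit := apply injective_projections; simpl.

Lemma Cexp_add u v : Cexp (Cplus u v) = Cmult (Cexp u) (Cexp v).
Proof.
  destruct u as [a b], v as [c d]; unfold Cexp, Cmult, Cplus; simpl.
  rewrite exp_plus, cos_plus, sin_plus. Csplit; ring.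
Qed.

Lemma Cexp_0 : Cexp (RtoC 0) = RtoC 1.
Proof. unfold Cexp; simpl. rewrite exp_0, cos_0, sin_0. Csplit; ring. Qed.

Lemma Cmod_Cexp u : Cmod (Cexp u) = exp (Re u).
Proof.
  destruct u as [a b]; unfold Cexp, Cmod; simpl.
  replace ((exp a * cos b) * ((exp a * cos b) * 1) + (exp a * sin b) * ((exp a * sin b) * 1))
    with (exp a * exp a) by (transitivity (exp a * exp a * ((sin b)² + (cos b)²)); [rewrite sin2_cos2; ring | unfold Rsqr; ring]).
  rewrite sqrt_square; [reflexivity|]. left; apply exp_pos.
Qed.

Lemma exp_le_mono x y : x <= y -> exp x <= exp y.
Proof. intros [H|H]; [left; now apply exp_increasing | subst; lra]. Qed.

Lemma exp_INR_mult n x : exp (INR n * x) = exp x ^ n.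
Proof.
  induction n. - simpl. rewrite Rmult_0_l, exp_0; reflexivity.
  - rewrite S_INR. simpl pow. rewrite <- IHn, <- exp_plus. f_equal. ring.
Qed.

Lemma Cmod_Cexp_le u : Cmod (Cexp u) <= exp (Cmod u).
Proof.
  rewrite Cmod_Cexp.   apply exp_le_mono. pose proof (re_le_Cmod u). apply Rabs_le_between in H. lra.
Qed.

Fixpoint Csum (f : nat -> C) (n : nat) : C :=
  match n with O => RtoC 0 | S n => Cplus (Csum f n) (f n) end.

Lemma Csum_ext (f g : nat -> C) n : (forall i, (i < n)%nat -> f i = g i) -> Csum f n = Csum g n.
Proof. induction n; intros H; simpl; [reflexivity|]. rewrite IHn by (intros; apply H; lia). now rewrite H by lia. Qed.

Lemma Csum_plus f g n : Csum (fun i => Cplus (f i) (g i)) n = Cplus (Csum f n) (Csum g n).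
Proof. induction n; simpl; [ring|]. rewrite IHn. ring. Qed.

Lemma Csum_scal c f n : Csum (fun i => Cmult c (f i)) n = Cmult c (Csum f n).
Proof. induction n; simpl; [ring|]. rewrite IHn. ring. Qed.

Lemma Csum_swap (f : nat -> nat -> C) n m :
  Csum (fun i => Csum (fun j => f i j) m) n = Csum (fun j => Csum (fun i => f i j) n) m.
Proof.
  induction n; simpl.
  - clear. induction m; simpl; [reflexivity|]. rewrite <- IHm. ring.
  - rewrite IHn. rewrite <- Csum_plus. reflexivity.
Qed.

Lemma Csum_const c n : Csum (fun _ => c) n = Cmult (RtoC (INR n)) c.
Proof.
  induction n; simpl Csum. - simpl. ring.
  - rewrite IHn, S_INR. rewrite RtoC_plus. ring.
Qed.

Lemma Csum_zero f n : (forall i, (i < n)%nat -> f i = RtoC 0) -> Csum f n = RtoC 0.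
Proof. intros H. rewrite (Csum_ext f (fun _ => RtoC 0)) by auto. rewrite Csum_const. ring. Qed.

Lemma Csum_one a x n : (a < n)%nat -> Csum (fun m => if Nat.eqb m a then x else RtoC 0) n = x.
Proof.
  induction n; intros H; [lia|]. simpl.
  destruct (Nat.eq_dec n a).
  - subst a. rewrite Nat.eqb_refl. rewrite Csum_zero. ring.
    intros i Hi. destruct (Nat.eqb_spec i n); [lia|reflexivity].
  - rewrite IHn by lia. destruct (Nat.eqb_spec n a); [lia|]. ring.
Qed.

Lemma Cmod_Csum_le f n B : (forall i, (i < n)%nat -> Cmod (f i) <= B) -> Cmod (Csum f n) <= INR n * B.
Proof.
  induction n; intros H; simpl Csum.
  - rewrite Cmod_0. simpl. lra.
  - eapply Rle_trans; [apply Cmod_triangle|]. rewrite S_INR.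
    assert (Cmod (Csum f n) <= INR n * B) by (apply IHn; intros; apply H; lia).
    assert (Cmod (f n) <= B) by (apply H; lia). lra.
Qed.

Lemma Re_Csum f n : Re (Csum f (S n)) = sum_f_R0 (fun m => Re (f m)) n.
Proof.
  induction n. - simpl. unfold Re; simpl. ring.
  - change (Csum f (S (S n))) with (Cplus (Csum f (S n)) (f (S n))).
    simpl sum_f_R0. rewrite <- IHn. reflexivity.
Qed.

Lemma Im_Csum f n : Im (Csum f (S n)) = sum_f_R0 (fun m => Im (f m)) n.
Proof.
  induction n. - simpl. unfold Im; simpl. ring.
  - change (Csum f (S (S n))) with (Cplus (Csum f (S n)) (f (S n))).
    simpl sum_f_R0. rewrite <- IHn. reflexivity.
Qed.

Fixpoint mknet (g : nat -> C * C * C) (n : nat) : list (C * C * C) :=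
  match n with O => nil | S n => g n :: mknet g n end.

Lemma mknet_length g n : length (mknet g n) = n.
Proof. induction n; simpl; auto. Qed.

Lemma mknet_eval sigma g n xi :
  shallow_net sigma (mknet g n) xi =
  Csum (fun j => Cmult (fst (fst (g j))) (sigma (Cplus (Cmult (snd (fst (g j))) xi) (snd (g j))))) n.
Proof. induction n; simpl; [reflexivity|]. unfold shallow_net in *. simpl. rewrite IHn. ring. Qed.

Lemma mknet_bounded g n M :
  (forall j, (j < n)%nat -> Cmod (fst (fst (g j))) <= M /\ Cmod (snd (fst (g j))) <= M /\ Cmod (snd (g j)) <= M) ->
  weights_bounded (mknet g n) M.
Proof.
  induction n; intros H; simpl; constructor.
  - apply H; lia.
  - apply IHn; intros; apply H; lia.
Qed.


Section Tay.
Variable z : C.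

Definition ReF (w : C) (t : R) : R := Re (Cmult w (Cexp (Cmult (RtoC t) z))).
Definition ImF (w : C) (t : R) : R := Im (Cmult w (Cexp (Cmult (RtoC t) z))).

Lemma tz_eq t : Cmult (RtoC t) z = (t * fst z, t * snd z).
Proof. destruct z; unfold Cmult, RtoC; simpl; f_equal; ring. Qed.

Lemma ReF_eq w t : ReF w t = fst w * (exp (t * fst z) * cos (t * snd z)) - snd w * (exp (t * fst z) * sin (t * snd z)).
Proof. unfold ReF; rewrite tz_eq; destruct w; unfold Cexp, Cmult; simpl. ring. Qed.

Lemma ImF_eq w t : ImF w t = fst w * (exp (t * fst z) * sin (t * snd z)) + snd w * (exp (t * fst z) * cos (t * snd z)).
Proof. unfold ImF; rewrite tz_eq; destruct w; unfold Cexp, Cmult; simpl. ring. Qed.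

Lemma ReF_derive w t : is_derive (ReF w) t (ReF (Cmult w z) t).
Proof.
  eapply is_derive_ext. { intros u. symmetry. apply ReF_eq. }
  rewrite ReF_eq. destruct w as [p q]; destruct z as [a b]; simpl.
  auto_derive; [exact I|]. ring.
Qed.

Lemma ImF_derive w t : is_derive (ImF w) t (ImF (Cmult w z) t).
Proof.
  eapply is_derive_ext. { intros u. symmetry. apply ImF_eq. }
  rewrite ImF_eq. destruct w as [p q]; destruct z as [a b]; simpl.
  auto_derive; [exact I|]. ring.
Qed.

Lemma gen_Derive_n (F : C -> R -> R) :
  (forall w t, is_derive (F w) t (F (Cmult w z) t)) ->
  forall m w t, Derive_n (F w) m t = F (Cmult w (Cpow z m)) t /\ ex_derive_n (F w) m t.
Proof.
  intros HF m. induction m; intros w t.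
  - simpl. split; [|exact I]. f_equal. ring.
  - split.
    + simpl. rewrite (Derive_ext _ (F (Cmult w (Cpow z m)))) by (intros; apply IHm).
      rewrite (is_derive_unique _ _ _ (HF _ t)). f_equal. ring.
    + simpl. apply (ex_derive_ext (F (Cmult w (Cpow z m)))).
      { intros; symmetry; apply IHm. }
      eexists; apply HF.
Qed.

Lemma gen_taylor (F : C -> R -> R) n :
  (forall w t, is_derive (F w) t (F (Cmult w z) t)) ->
  exists zeta, 0 < zeta < 1 /\
   F (RtoC 1) 1 = sum_f_R0 (fun m => / INR (Factorial.fact m) * F (Cpow z m) 0) n
     + / INR (Factorial.fact (S n)) * F (Cpow z (S n)) zeta.
Proof.
  intros HF.
  destruct (Taylor_Lagrange (F (RtoC 1)) n 0 1 Rlt_0_1) as [zeta [Hz Heq]].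
  { intros t _ k _. apply (gen_Derive_n F HF). }
  exists zeta. split; [exact Hz|]. rewrite Heq. f_equal.
  - apply sum_eq. intros i _. rewrite (proj1 (gen_Derive_n F HF _ _ _)).
    rewrite Rminus_0_r, pow1. unfold Rdiv. rewrite Rmult_1_l. f_equal. f_equal. ring.
  - rewrite (proj1 (gen_Derive_n F HF _ _ _)).
    rewrite Rminus_0_r, pow1. unfold Rdiv. rewrite Rmult_1_l. f_equal. f_equal. ring.
Qed.
End Tay.

Definition Tpoly (z : C) (N : nat) : C :=
  Csum (fun m => Cmult (RtoC (/ INR (Factorial.fact m))) (Cpow z m)) N.

Lemma Cmod_le_ReIm c : Cmod c <= Rabs (Re c) + Rabs (Im c).
Proof.
  destruct c as [x y]; unfold Cmod, Re, Im; simpl.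
  rewrite <- (sqrt_Rsqr (Rabs x + Rabs y)) by (pose proof (Rabs_pos x); pose proof (Rabs_pos y); lra).
  apply sqrt_le_1_alt. pose proof (Rsqr_abs x). pose proof (Rsqr_abs y). unfold Rsqr in *.
  pose proof (Rabs_pos x); pose proof (Rabs_pos y). nra.
Qed.

Lemma Re_scal a c : Re (Cmult (RtoC a) c) = a * Re c.
Proof. destruct c; unfold Cmult, RtoC, Re; simpl; ring. Qed.
Lemma Im_scal a c : Im (Cmult (RtoC a) c) = a * Im c.
Proof. destruct c; unfold Cmult, RtoC, Im; simpl; ring. Qed.

Lemma Re_minus a b : Re (Cminus a b) = Re a - Re b.
Proof. destruct a, b; unfold Cminus, Cplus, Copp, Re; simpl; ring. Qed.
Lemma Im_minus a b : Im (Cminus a b) = Im a - Im b.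
Proof. destruct a, b; unfold Cminus, Cplus, Copp, Im; simpl; ring. Qed.

Lemma im_le_Cmod c : Rabs (Im c) <= Cmod c.
Proof.
  destruct c as [x y]; unfold Cmod, Im; simpl. rewrite <- sqrt_Rsqr_abs.
  apply sqrt_le_1_alt. unfold Rsqr. nra.
Qed.

Lemma F_bound z w zeta : 0 < zeta < 1 ->
  Cmod (Cmult w (Cexp (Cmult (RtoC zeta) z))) <= Cmod w * exp (Cmod z).
Proof.
  intros Hz. rewrite Cmod_mult. apply Rmult_le_compat_l; [apply Cmod_ge_0|].
  eapply Rle_trans; [apply Cmod_Cexp_le|]. apply exp_le_mono.
  rewrite Cmod_mult, Cmod_R, Rabs_pos_eq by lra.
  pose proof (Cmod_ge_0 z). nra.
Qed.

Lemma taylor_bound z n :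
  Cmod (Cminus (Cexp z) (Tpoly z (S n))) <=
  2 * (/ INR (Factorial.fact (S n)) * (Cmod z ^ (S n) * exp (Cmod z))).
Proof.
  assert (Hf : 0 < / INR (Factorial.fact (S n))) by (apply Rinv_0_lt_compat, INR_fact_lt_0).
  assert (HB : forall zeta, 0 < zeta < 1 -> forall x, Rabs x <= Cmod (Cmult (Cpow z (S n)) (Cexp (Cmult (RtoC zeta) z))) ->
     Rabs (/ INR (Factorial.fact (S n)) * x) <= / INR (Factorial.fact (S n)) * (Cmod z ^ (S n) * exp (Cmod z))).
  { intros zeta Hz x Hx. rewrite Rabs_mult, Rabs_pos_eq by lra. apply Rmult_le_compat_l; [lra|].
    eapply Rle_trans; [exact Hx|]. eapply Rle_trans; [apply F_bound; exact Hz|].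
    rewrite Cmod_pow. lra. }
  assert (H1 : Cmult (RtoC 1) z = z) by ring.
  assert (H0 : forall m, Cmult (Cpow z m) (Cexp (Cmult (RtoC 0) z)) = Cpow z m).
  { intros m. replace (Cmult (RtoC 0) z) with (RtoC 0) by ring. rewrite Cexp_0. ring. }
  eapply Rle_trans; [apply Cmod_le_ReIm|].
  replace 2 with (1 + 1) by ring. rewrite Rmult_plus_distr_r, Rmult_1_l.
  apply Rplus_le_compat.
  - destruct (gen_taylor z (ReF z) n (ReF_derive z)) as [zeta [Hz Heq]].
    unfold ReF at 1 in Heq. rewrite H1, Cmult_1_l in Heq.
    replace (Re (Cminus (Cexp z) (Tpoly z (S n)))) with (/ INR (Factorial.fact (S n)) * ReF z (Cpow z (S n)) zeta).
    + apply (HB zeta Hz). apply re_le_Cmod.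
    + rewrite Re_minus. unfold Tpoly. rewrite Heq.
      rewrite Re_Csum. 
      replace (sum_f_R0 (fun m : nat => / INR (Factorial.fact m) * ReF z (Cpow z m) 0) n)
        with (sum_f_R0 (fun m : nat => Re (Cmult (RtoC (/ INR (Factorial.fact m))) (Cpow z m))) n).
      * ring.
      * apply sum_eq. intros i _. rewrite Re_scal. unfold ReF. rewrite H0. reflexivity.
  - destruct (gen_taylor z (ImF z) n (ImF_derive z)) as [zeta [Hz Heq]].
    unfold ImF at 1 in Heq. rewrite H1, Cmult_1_l in Heq.
    replace (Im (Cminus (Cexp z) (Tpoly z (S n)))) with (/ INR (Factorial.fact (S n)) * ImF z (Cpow z (S n)) zeta).
    + apply (HB zeta Hz). apply im_le_Cmod.
    + rewrite Im_minus. unfold Tpoly. rewrite Heq.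
      rewrite Im_Csum. 
      replace (sum_f_R0 (fun m : nat => / INR (Factorial.fact m) * ImF z (Cpow z m) 0) n)
        with (sum_f_R0 (fun m : nat => Im (Cmult (RtoC (/ INR (Factorial.fact m))) (Cpow z m))) n).
      * ring.
      * apply sum_eq. intros i _. rewrite Im_scal. unfold ImF. rewrite H0. reflexivity.
Qed.


Definition om (J : nat) : C := Cexp (0, 2 * PI / INR J).

Lemma om_pow J n : (0 < J)%nat -> Cpow (om J) n = Cexp (0, 2 * PI * INR n / INR J).
Proof.
  intros HJ. assert (INR J <> 0) by (apply not_0_INR; lia).
  induction n.
  - simpl. replace (2 * PI * 0 / INR J) with 0 by (field; auto).
    symmetry. apply Cexp_0.
  - rewrite Cpow_S, IHn. unfold om. rewrite <- Cexp_add. f_equal.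
    rewrite S_INR. unfold Cplus; cbn [fst snd]. f_equal; [ring|field; auto].
Qed.

Lemma Cmod_om_pow J n : (0 < J)%nat -> Cmod (Cpow (om J) n) = 1.
Proof. intros HJ. rewrite om_pow by auto. rewrite Cmod_Cexp. simpl. apply exp_0. Qed.

Lemma om_J J : (0 < J)%nat -> Cpow (om J) J = RtoC 1.
Proof.
  intros HJ. assert (INR J <> 0) by (apply not_0_INR; lia).
  rewrite om_pow by auto. replace (2 * PI * INR J / INR J) with (2 * PI) by (field; auto).
  unfold Cexp; simpl. rewrite exp_0, cos_2PI, sin_2PI. unfold RtoC. f_equal; ring.
Qed.

Lemma om_pow_red J q r : (0 < J)%nat -> Cpow (om J) (q * J + r) = Cpow (om J) r.
Proof.
  intros HJ. rewrite Cpow_add_r, Nat.mul_comm, Cpow_mult_r, om_J, Cpow_1_l by auto. ring.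
Qed.

Lemma om_pow_ne1 J r : (0 < r < J)%nat -> Cpow (om J) r <> RtoC 1.
Proof.
  intros Hr. assert (HJ : 0 < INR J) by (apply lt_0_INR; lia).
  assert (Hr0 : 0 < INR r) by (apply lt_0_INR; lia).
  assert (HrJ : INR r < INR J) by (apply lt_INR; lia).
  rewrite om_pow by lia. unfold Cexp; simpl. rewrite exp_0, !Rmult_1_l.
  intros Heq. assert (Hc : cos (2 * PI * INR r / INR J) = 1) by (apply (f_equal fst) in Heq; simpl in Heq; lra).
  assert (Hs : sin (2 * PI * INR r / INR J) = 0) by (apply (f_equal snd) in Heq; simpl in Heq; lra).
  pose proof PI_RGT_0.
  assert (H0 : 0 < 2 * PI * INR r / INR J).
  { apply Rdiv_lt_0_compat; [|lra]. nra. }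
  assert (H2 : 2 * PI * INR r / INR J < 2 * PI).
  { apply Rmult_lt_reg_r with (INR J); [lra|]. unfold Rdiv. rewrite Rmult_assoc, Rinv_l by lra. nra. }
  destruct (sin_eq_O_2PI_0 (2 * PI * INR r / INR J) ltac:(lra) ltac:(lra) Hs) as [E|[E|E]]; try lra.
  rewrite E, cos_PI in Hc. lra.
Qed.

Lemma geom_sum x n : Cmult (Cminus x (RtoC 1)) (Csum (fun j => Cpow x j) n) = Cminus (Cpow x n) (RtoC 1).
Proof. induction n; simpl Csum. - simpl. ring. - rewrite Cpow_S. rewrite <- (Cplus_0_r (Cpow x n)) at 2. 
  replace (Cmult (Cminus x (RtoC 1)) (Cplus (Csum (fun j : nat => Cpow x j) n) (Cpow x n)))
   with (Cplus (Cmult (Cminus x (RtoC 1)) (Csum (fun j : nat => Cpow x j) n)) (Cmult (Cminus x (RtoC 1)) (Cpow x n))) by ring.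
  rewrite IHn. ring. Qed.

Definition G (J n : nat) : C := Csum (fun j => Cpow (Cpow (om J) j) n) J.

Lemma G_eq J n : G J n = Csum (fun j => Cpow (Cpow (om J) n) j) J.
Proof. unfold G. apply Csum_ext. intros i _. rewrite <- !Cpow_mult_r. f_equal. lia. Qed.

Lemma G_zero J q r : (0 < r < J)%nat -> G J (q * J + r) = RtoC 0.
Proof.
  intros Hr. rewrite G_eq, om_pow_red by lia.
  set (x := Cpow (om J) r).
  assert (Hx : Cminus x (RtoC 1) <> RtoC 0).
  { intros E. apply (om_pow_ne1 J r Hr). fold x. 
    replace x with (Cplus (Cminus x (RtoC 1)) (RtoC 1)) by ring. rewrite E. ring. }
  assert (HxJ : Cpow x J = RtoC 1).
  { unfold x. rewrite <- Cpow_mult_r, Nat.mul_comm, Cpow_mult_r, om_J, Cpow_1_l by lia. reflexivity. }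
  pose proof (geom_sum x J) as Hg. rewrite HxJ in Hg.
  replace (Csum (fun j : nat => Cpow x j) J) with
    (Cmult (Cinv (Cminus x (RtoC 1))) (Cmult (Cminus x (RtoC 1)) (Csum (fun j : nat => Cpow x j) J))) by (field; auto).
  rewrite Hg. ring.
Qed.

Lemma G_J J q : (0 < J)%nat -> G J (q * J) = RtoC (INR J).
Proof.
  intros HJ. rewrite G_eq. replace (q * J)%nat with (q * J + 0)%nat by lia.
  rewrite om_pow_red by lia. simpl Cpow.
  rewrite (Csum_ext _ (fun _ => RtoC 1)) by (intros; apply Cpow_1_l).
  rewrite Csum_const. ring.
Qed.


Lemma fact_binom_nat k J : (k <= J)%nat -> (Factorial.fact k * 2 ^ k * Factorial.fact J <= Factorial.fact (k + J))%nat.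
Proof.
  induction k; intros H.
  - simpl. lia.
  - specialize (IHk ltac:(lia)). change (Factorial.fact (S k)) with (S k * Factorial.fact k)%nat.
    replace (S k + J)%nat with (S (k + J)) by lia.
    change (Factorial.fact (S (k + J))) with (S (k + J) * Factorial.fact (k + J))%nat.
    rewrite Nat.pow_succ_r'.
    replace (S k * Factorial.fact k * (2 * 2 ^ k) * Factorial.fact J)%nat
      with ((2 * S k) * (Factorial.fact k * 2 ^ k * Factorial.fact J))%nat by ring.
    apply Nat.mul_le_mono; lia.
Qed.

Lemma fact_binom k J : (k <= J)%nat ->
  INR (Factorial.fact k) * 2 ^ k * INR (Factorial.fact J) <= INR (Factorial.fact (k + J)).
Proof.
  intros H. apply fact_binom_nat in H. apply le_INR in H.
  rewrite !mult_INR, pow_INR in H. simpl (INR 2) in H. exact H.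
Qed.

Lemma fact_stirling m : INR m ^ m <= INR (Factorial.fact m) * exp 1 ^ m.
Proof.
  assert (Hf := INR_fact_lt_0 m).
  assert (H : INR m ^ m / INR (Factorial.fact m) <= exp (INR m)).
  { eapply Rle_trans; [|apply (exp_ge_taylor (INR m) m); apply pos_INR].
    destruct m. - simpl. lra.
    - rewrite tech5. assert (0 <= sum_f_R0 (fun k : nat => INR (S m) ^ k / INR (Factorial.fact k)) m).
      { apply cond_pos_sum. intros i. apply Rdiv_le_0_compat; [apply pow_le, pos_INR| apply INR_fact_lt_0]. }
      lra. }
  replace (exp (INR m)) with (exp 1 ^ m) in H by (rewrite <- exp_INR_mult; f_equal; ring).
  apply Rmult_le_reg_r with (/ INR (Factorial.fact m)); [apply Rinv_0_lt_compat; lra|].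
  replace (INR (Factorial.fact m) * exp 1 ^ m * / INR (Factorial.fact m)) with (exp 1 ^ m) by (field; lra).
  exact H.
Qed.

Lemma frac_le X Y u w : 0 < u -> 0 < w -> X * w <= Y * u -> X / u <= Y / w.
Proof.
  intros Hu Hw H. unfold Rdiv.
  replace (X * / u) with ((X * w) * / (u * w)) by (field; lra).
  replace (Y * / w) with ((Y * u) * / (u * w)) by (field; lra).
  apply Rmult_le_compat_r; [left; apply Rinv_0_lt_compat; nra | exact H].
Qed.

Lemma yJ_eq K JJ J : 0 < JJ -> (2 * exp 1 * K / JJ) ^ J = (K * 2) ^ J * exp 1 ^ J / JJ ^ J.
Proof.
  intros HJ. replace (2 * exp 1 * K / JJ) with ((K * 2) * exp 1 * / JJ) by (field; lra).
  rewrite !Rpow_mult_distr, pow_inv. field. apply pow_nonzero. lra.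
Qed.

Lemma T1_bound k J : (1 <= k)%nat -> (k <= J)%nat -> 2 * exp 1 * INR k < INR J ->
  INR (Factorial.fact k) / (INR J * INR k ^ k) * INR J *
    (/ INR (Factorial.fact (k + J)) * (INR k * 2) ^ (k + J))
  <= (2 * exp 1 * INR k / INR J) ^ J.
Proof.
  intros Hk HkJ Hr.
  assert (HK : 0 < INR k) by (apply lt_0_INR; lia).
  assert (HJ : 0 < INR J) by (apply lt_0_INR; lia).
  assert (HKk : 0 < INR k ^ k) by (apply pow_lt; lra).
  pose proof (INR_fact_lt_0 k) as Fk. pose proof (INR_fact_lt_0 J) as FJ.
  pose proof (INR_fact_lt_0 (k + J)) as FkJ.
  rewrite pow_add, (Rpow_mult_distr (INR k) 2 k).
  replace (INR (Factorial.fact k) / (INR J * INR k ^ k) * INR J *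
    (/ INR (Factorial.fact (k + J)) * (INR k ^ k * 2 ^ k * (INR k * 2) ^ J)))
   with ((INR (Factorial.fact k) * 2 ^ k * (INR k * 2) ^ J) / INR (Factorial.fact (k + J))) by (field; lra).
  rewrite yJ_eq by lra.
  apply frac_le; [lra| apply pow_lt; lra|].
  pose proof (fact_binom k J HkJ). pose proof (fact_stirling J).
  set (a := INR (Factorial.fact k) * 2 ^ k) in *.
  set (P := (INR k * 2) ^ J). set (E := exp 1 ^ J) in *.
  assert (0 <= a) by (unfold a; apply Rmult_le_pos; [lra| apply pow_le; lra]).
  assert (0 <= P) by (apply pow_le; lra).
  assert (0 <= E) by (apply pow_le; pose proof (exp_pos 1); lra).
  apply Rle_trans with (a * P * (INR (Factorial.fact J) * E)).
  - apply Rmult_le_compat_l; [nra|assumption].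
  - replace (a * P * (INR (Factorial.fact J) * E)) with (P * E * (a * INR (Factorial.fact J))) by ring.
    apply Rmult_le_compat_l; [nra|assumption].
Qed.

Lemma T2_bound k J : (1 <= k)%nat -> (2 * k + 1 <= J)%nat -> 2 * exp 1 * INR k < INR J ->
  INR (Factorial.fact k) / (INR J * INR k ^ k) *
    (INR J * (2 * (/ INR (Factorial.fact (k + 2 * J)) *
      ((INR k * 2) ^ (k + 2 * J) * exp (INR k * 2)))))
  <= (2 * exp 1 * INR k / INR J) ^ J.
Proof.
  intros Hk HkJ Hr.
  assert (HK : 0 < INR k) by (apply lt_0_INR; lia).
  assert (HJ : 0 < INR J) by (apply lt_0_INR; lia).
  assert (HKk : 0 < INR k ^ k) by (apply pow_lt; lra).
  pose proof (INR_fact_lt_0 k) as Fk. pose proof (INR_fact_lt_0 (2 * J)) as F2J.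
  pose proof (INR_fact_lt_0 (k + 2 * J)) as FkJ.
  pose proof (exp_pos 1) as He.
  rewrite pow_add, (Rpow_mult_distr (INR k) 2 k).
  set (a := INR (Factorial.fact k) * 2 ^ k).
  set (X := exp (INR k * 2)).
  replace (INR (Factorial.fact k) / (INR J * INR k ^ k) *
    (INR J * (2 * (/ INR (Factorial.fact (k + 2 * J)) *
      (INR k ^ k * 2 ^ k * (INR k * 2) ^ (2 * J) * X)))))
   with ((2 * a * (INR k * 2) ^ (2 * J) * X) / INR (Factorial.fact (k + 2 * J))) by (unfold a; field; lra).
  rewrite yJ_eq by lra.
  apply frac_le; [lra| apply pow_lt; lra|].
  pose proof (fact_binom k (2 * J) ltac:(lia)) as H4. fold a in H4.
  pose proof (fact_stirling (2 * J)) as H3.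
  replace (2 * J)%nat with (J + J)%nat in * by lia.
  rewrite !pow_add in *. rewrite plus_INR in H3.
  set (P := (INR k * 2) ^ J) in *. set (E := exp 1 ^ J) in *.
  set (F2j := INR (Factorial.fact (J + J))) in *.
  set (F := INR (Factorial.fact (k + (J + J)))) in *.
  set (JJ := INR J ^ J).
  assert (Ha : 0 < a) by (unfold a; apply Rmult_lt_0_compat; [lra| apply pow_lt; lra]).
  assert (HP : 0 < P) by (apply pow_lt; lra).
  assert (HE : 0 < E) by (apply pow_lt; lra).
  assert (HJJ : 0 < JJ) by (apply pow_lt; lra).
  assert (H1 : P * E <= JJ).
  { unfold P, E, JJ. rewrite <- Rpow_mult_distr. apply pow_incr. split; [nra|lra]. }
  assert (H2 : 2 * X <= 4 ^ J).
  { unfold X. replace (exp (INR k * 2)) with (exp 1 ^ (2 * k)) by (rewrite <- exp_INR_mult; f_equal; rewrite mult_INR; simpl; ring).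
    assert (exp 1 ^ (2 * k) <= 4 ^ (2 * k)) by (apply pow_incr; pose proof exp_le_3; lra).
    assert (4 ^ (2 * k + 1) <= 4 ^ J) by (apply Rle_pow; [lra|lia]).
    rewrite pow_add in H0. simpl (4 ^ 1) in H0. assert (0 <= 4 ^ (2 * k)) by (apply pow_le; lra). lra. }
  assert (H3' : 4 ^ J * JJ * JJ <= F2j * (E * E)).
  { replace (4 ^ J * JJ * JJ) with ((INR J + INR J) ^ J * (INR J + INR J) ^ J).
    - exact H3.
    - unfold JJ. replace (INR J + INR J) with (2 * INR J) by ring. rewrite Rpow_mult_distr.
      replace 4 with (2 * 2) by ring. rewrite Rpow_mult_distr. ring. }
  apply Rle_trans with (P * E * (a * F2j)).
  2: { apply Rmult_le_compat_l; [nra|exact H4]. }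
  apply Rmult_le_reg_r with (E * E); [nra|].
  apply Rle_trans with ((a * P * E * JJ) * (4 ^ J * JJ)).
  - replace (2 * a * (P * P) * X * JJ * (E * E)) with ((a * P * E * JJ) * ((2 * X) * (P * E))) by ring.
    apply Rmult_le_compat_l; [left; repeat (first [assumption | apply Rmult_lt_0_compat])|]. assert (0 < X) by apply exp_pos. apply Rmult_le_compat; nra.
  - replace (a * P * E * JJ * (4 ^ J * JJ)) with ((P * E * a) * (4 ^ J * JJ * JJ)) by ring.
    replace (P * E * (a * F2j) * (E * E)) with ((P * E * a) * (F2j * (E * E))) by ring.
    apply Rmult_le_compat_l; [left; repeat (first [assumption | apply Rmult_lt_0_compat])|exact H3'].
Qed.


Lemma RtoC_nz x : x <> 0 -> RtoC x <> RtoC 0.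
Proof. intros H E. apply (f_equal fst) in E. simpl in E. auto. Qed.

Lemma sum_G k J (c : nat -> C) : (1 <= k)%nat -> (2 * k + 1 <= J)%nat ->
  Csum (fun m => Cmult (c m) (G J (k * J - k + m))) (k + 2 * J) =
  Cplus (Cmult (RtoC (INR J)) (c k)) (Cmult (RtoC (INR J)) (c (k + J)%nat)).
Proof.
  intros Hk HJ.
  rewrite (Csum_ext _ (fun m => Cplus (if Nat.eqb m k then Cmult (RtoC (INR J)) (c k) else RtoC 0)
                                        (if Nat.eqb m (k + J) then Cmult (RtoC (INR J)) (c (k + J)%nat) else RtoC 0))).
  - rewrite Csum_plus, !Csum_one by lia. reflexivity.
  - intros m Hm. destruct (Nat.eqb_spec m k) as [E1|E1]; destruct (Nat.eqb_spec m (k + J)) as [E2|E2].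
    + lia.
    + subst m. replace (k * J - k + k)%nat with (k * J)%nat by nia. rewrite G_J by lia. ring.
    + subst m. replace (k * J - k + (k + J))%nat with ((k + 1) * J)%nat by nia. rewrite G_J by lia. ring.
    + rewrite Cplus_0_l.
      destruct (Nat.lt_ge_cases m k) as [L1|L1].
      { replace (k * J - k + m)%nat with ((k - 1) * J + (J - k + m))%nat by nia.
        rewrite G_zero by lia. ring. }
      destruct (Nat.lt_ge_cases m (k + J)) as [L2|L2].
      { replace (k * J - k + m)%nat with (k * J + (m - k))%nat by nia.
        rewrite G_zero by lia. ring. }
      { replace (k * J - k + m)%nat with ((k + 1) * J + (m - k - J))%nat by nia.
        rewrite G_zero by lia. ring. }
Qed.

Lemma fact_le_pow k : (Factorial.fact k <= k ^ k)%nat.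
Proof.
  induction k. - simpl. lia.
  - change (Factorial.fact (S k)) with (S k * Factorial.fact k)%nat. rewrite Nat.pow_succ_r'.
    apply Nat.mul_le_mono_l. eapply Nat.le_trans; [exact IHk|]. apply Nat.pow_le_mono_l. lia.
Qed.

Lemma mknet_Forall (P : C * C * C -> Prop) g n : (forall j, P (g j)) -> List.Forall P (mknet g n).
Proof. intros H; induction n; simpl; constructor; auto. Qed.

Lemma taylor_bound' z N : (0 < N)%nat ->
  Cmod (Cminus (Cexp z) (Tpoly z N)) <= 2 * (/ INR (Factorial.fact N) * (Cmod z ^ N * exp (Cmod z))).
Proof. intros H. destruct N; [lia|]. apply taylor_bound. Qed.

Lemma exp_net k J : (1 <= k)%nat -> 2 * exp 1 * INR k < INR J ->
  exists nn : list (C * C * C), length nn = J /\ weights_bounded nn (INR (S k)) /\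
    List.Forall (fun n : C * C * C => snd n = RtoC 0) nn /\
    forall xi, Cmod xi <= 2 ->
      Cmod (Cminus (shallow_net Cexp nn xi) (pow_n xi k)) <= 2 * (2 * exp 1 * INR k / INR J) ^ J.
Proof.
  intros Hk Hr.
  assert (HK1 : 1 <= INR k) by (apply (le_INR 1) in Hk; simpl in Hk; exact Hk).
  assert (HJk : (2 * k + 1 <= J)%nat).
  { pose proof (exp_ineq1 1 ltac:(lra)) as He.
    assert (INR (2 * k + 1) < INR J) by (rewrite plus_INR, mult_INR; simpl; nra).
    apply INR_lt in H; lia. }
  assert (HJ : 0 < INR J) by (apply lt_0_INR; lia).
  assert (HK : 0 < INR k) by lra.
  pose proof (INR_fact_lt_0 k) as Fk.
  set (K := RtoC (INR k)). set (s := (k * J - k)%nat).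
  set (A := Cdiv (RtoC (INR (Factorial.fact k))) (Cmult (RtoC (INR J)) (Cpow K k))).
  assert (HKnz : K <> RtoC 0) by (apply RtoC_nz; lra).
  assert (HJnz : RtoC (INR J) <> RtoC 0) by (apply RtoC_nz; lra).
  assert (HFnz : RtoC (INR (Factorial.fact k)) <> RtoC 0) by (apply RtoC_nz; lra).
  assert (HKk : Cpow K k <> RtoC 0) by (apply Cpow_nz; exact HKnz).
  assert (HA : Cmod A = INR (Factorial.fact k) / (INR J * INR k ^ k)).
  { unfold A. rewrite Cmod_div by (apply Cmult_neq_0; assumption).
    unfold K. rewrite Cmod_mult, Cmod_pow, !Cmod_R, !Rabs_pos_eq by lra. reflexivity. }
  assert (HA1 : Cmod A <= 1).
  { rewrite HA. pose proof (fact_le_pow k) as Hf. apply le_INR in Hf. rewrite pow_INR in Hf.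
    assert (HJ1 : 1 <= INR J) by (apply (le_INR 1); lia).
    assert (0 < INR k ^ k) by (apply pow_lt; lra).
    apply Rmult_le_reg_r with (INR J * INR k ^ k); [nra|].
    unfold Rdiv. rewrite Rmult_assoc, Rinv_l by nra. nra. }
  exists (mknet (fun j => (Cmult A (Cpow (Cpow (om J) j) s), Cmult (Cpow (om J) j) K, RtoC 0)) J).
  split; [apply mknet_length|]. split.
  { apply mknet_bounded. intros j Hj. cbn [fst snd]. rewrite S_INR. repeat split.
    - rewrite Cmod_mult, Cmod_pow, Cmod_om_pow, pow1 by lia. nra.
    - rewrite Cmod_mult, Cmod_om_pow by lia. unfold K. rewrite Cmod_R, Rabs_pos_eq; lra.
    - rewrite Cmod_0. lra. }
  split; [apply mknet_Forall; intros; reflexivity|].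
  intros xi Hxi. rewrite mknet_eval. simpl fst; simpl snd.
  set (N := (k + 2 * J)%nat).
  set (c := fun m => Cmult (RtoC (/ INR (Factorial.fact m))) (Cpow (Cmult K xi) m)).
  set (z := fun j => Cmult (Cpow (om J) j) (Cmult K xi)).
  assert (Hid : Cminus (Csum (fun j => Cmult (Cmult A (Cpow (Cpow (om J) j) s))
                  (Cexp (Cplus (Cmult (Cmult (Cpow (om J) j) K) xi) (RtoC 0)))) J) (pow_n xi k)
     = Cplus (Cmult (Cmult A (RtoC (INR J))) (c (k + J)%nat))
             (Cmult A (Csum (fun j => Cmult (Cpow (Cpow (om J) j) s) (Cminus (Cexp (z j)) (Tpoly (z j) N))) J))).
  { rewrite (Csum_ext _ (fun j => Cplus (Cmult A (Cmult (Cpow (Cpow (om J) j) s) (Tpoly (z j) N)))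
                 (Cmult A (Cmult (Cpow (Cpow (om J) j) s) (Cminus (Cexp (z j)) (Tpoly (z j) N)))))).
    2: { intros j _. replace (Cplus (Cmult (Cmult (Cpow (om J) j) K) xi) (RtoC 0)) with (z j) by (unfold z; ring). ring. }
    rewrite Csum_plus, !Csum_scal.
    assert (HT : Csum (fun j => Cmult (Cpow (Cpow (om J) j) s) (Tpoly (z j) N)) J
                 = Csum (fun m => Cmult (c m) (G J (s + m))) N).
    { unfold Tpoly. rewrite (Csum_ext _ (fun j => Csum (fun m => Cmult (c m) (Cpow (Cpow (om J) j) (s + m))) N)).
      - rewrite Csum_swap. apply Csum_ext. intros m _. unfold G. rewrite <- Csum_scal. reflexivity.
      - intros j _. rewrite <- Csum_scal. apply Csum_ext. intros m _. unfold c, z.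
        rewrite Cpow_add_r, !Cpow_mult_l. ring. }
    rewrite HT. unfold s, N. rewrite sum_G by lia.
    assert (Hk' : Cmult A (Cmult (RtoC (INR J)) (c k)) = pow_n xi k).
    { rewrite pow_n_Cpow. unfold A, c. rewrite Cpow_mult_l.
      cbv beta. rewrite RtoC_inv by lra. field. repeat split; assumption. }
    rewrite <- Hk'. ring. }
  rewrite Hid. eapply Rle_trans; [apply Cmod_triangle|].
  replace (2 * (2 * exp 1 * INR k / INR J) ^ J) with
    ((2 * exp 1 * INR k / INR J) ^ J + (2 * exp 1 * INR k / INR J) ^ J) by ring.
  assert (HCz : Cmod (Cmult K xi) <= INR k * 2).
  { unfold K. rewrite Cmod_mult, Cmod_R, Rabs_pos_eq by lra. nra. }
  apply Rplus_le_compat.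
  - eapply Rle_trans; [|apply (T1_bound k J); lia || assumption].
    rewrite !Cmod_mult, HA, Cmod_R, Rabs_pos_eq by lra.
    apply Rmult_le_compat_l; [apply Rmult_le_pos; [rewrite <- HA; apply Cmod_ge_0|lra]|].
    unfold c. rewrite Cmod_mult, Cmod_R, Rabs_pos_eq, Cmod_pow.
    2: { left; apply Rinv_0_lt_compat, INR_fact_lt_0. }
    apply Rmult_le_compat_l; [left; apply Rinv_0_lt_compat, INR_fact_lt_0|].
    apply pow_incr. split; [apply Cmod_ge_0|exact HCz].
  - eapply Rle_trans; [|apply (T2_bound k J); lia || assumption].
    rewrite Cmod_mult, HA. apply Rmult_le_compat_l; [rewrite <- HA; apply Cmod_ge_0|].
    apply Cmod_Csum_le. intros j Hj.
    rewrite Cmod_mult, Cmod_pow, Cmod_om_pow, pow1, Rmult_1_l by lia.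
    eapply Rle_trans; [apply taylor_bound'; unfold N; lia|].
    assert (Hz : Cmod (z j) <= INR k * 2).
    { unfold z. rewrite Cmod_mult, Cmod_om_pow, Rmult_1_l by lia. exact HCz. }
    apply Rmult_le_compat_l; [lra|].
    apply Rmult_le_compat_l; [left; apply Rinv_0_lt_compat, INR_fact_lt_0|].
    apply Rmult_le_compat.
    + apply pow_le, Cmod_ge_0.
    + left; apply exp_pos.
    + apply pow_incr. split; [apply Cmod_ge_0|exact Hz].
    + apply exp_le_mono. exact Hz.
Qed.


Lemma iPI2 : Cmult Ci (RtoC (PI / 2)) = (0, PI / 2).
Proof. unfold Ci, RtoC, Cmult; simpl; f_equal; ring. Qed.

Lemma Cexp_iPI2 : Cexp (0, PI / 2) = Ci.
Proof. unfold Cexp, Ci; simpl. rewrite exp_0, cos_PI2, sin_PI2. f_equal; ring. Qed.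

Lemma Cexp_miPI2 : Cexp (0, - (PI / 2)) = Copp Ci.
Proof. unfold Cexp, Ci, Copp; simpl. rewrite exp_0, cos_neg, sin_neg, cos_PI2, sin_PI2. f_equal; ring. Qed.

Lemma sinh_id a u :
  Cmult a (Cexp u) = Cplus (Cmult a (Csinh u)) (Cmult (Cmult (Copp Ci) a) (Csinh (Cplus u (Cmult Ci (RtoC (PI / 2)))))).
Proof.
  unfold Csinh. rewrite iPI2.
  replace (Copp (Cplus u (0, PI / 2))) with (Cplus (Copp u) (0, - (PI / 2))) by (destruct u; unfold Copp, Cplus; simpl; f_equal; ring).
  rewrite !Cexp_add, Cexp_iPI2, Cexp_miPI2.
  generalize (Cexp u) (Cexp (Copp u)). intros [p q] [r t]. destruct a as [x y].
  unfold Cmult, Cplus, Cminus, Copp, Cdiv, Cinv, Ci, RtoC; simpl. f_equal; field.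
Qed.

Lemma sin_id a w b xi :
  Cmult a (Csinh (Cplus (Cmult w xi) b)) =
  Cmult (Cmult (Copp Ci) a) (Csin (Cplus (Cmult (Cmult Ci w) xi) (Cmult Ci b))).
Proof.
  set (u := Cplus (Cmult w xi) b).
  replace (Cplus (Cmult (Cmult Ci w) xi) (Cmult Ci b)) with (Cmult Ci u) by (unfold u; ring).
  unfold Csin, Csinh.
  replace (Cmult Ci (Cmult Ci u)) with (Copp u) by (destruct u; unfold Ci, Cmult, Copp; simpl; f_equal; ring).
  replace (Copp (Copp u)) with u by ring.
  assert (H2 : RtoC 2 <> RtoC 0) by (apply RtoC_nz; lra).
  field. exact Ci_nz.
Qed.

Fixpoint to_sinh (nn : list (C * C * C)) : list (C * C * C) :=
  match nn with
  | nil => nil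
  | (a, w, b) :: t => (a, w, b) :: (Cmult (Copp Ci) a, w, Cplus b (Cmult Ci (RtoC (PI / 2)))) :: to_sinh t
  end.

Fixpoint to_sin (nn : list (C * C * C)) : list (C * C * C) :=
  match nn with
  | nil => nil
  | (a, w, b) :: t => (Cmult (Copp Ci) a, Cmult Ci w, Cmult Ci b) :: to_sin t
  end.

Lemma to_sinh_eval nn xi : shallow_net Csinh (to_sinh nn) xi = shallow_net Cexp nn xi.
Proof.
  induction nn as [|[[a w] b] t IH]; [reflexivity|].
  unfold shallow_net in *; simpl. rewrite IH. rewrite sinh_id.
  replace (Cplus (Cmult w xi) (Cplus b (Cmult Ci (RtoC (PI / 2)))))
    with (Cplus (Cplus (Cmult w xi) b) (Cmult Ci (RtoC (PI / 2)))) by ring. ring.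
Qed.

Lemma to_sin_eval nn xi : shallow_net Csin (to_sin nn) xi = shallow_net Csinh nn xi.
Proof.
  induction nn as [|[[a w] b] t IH]; [reflexivity|].
  unfold shallow_net in *; simpl. rewrite IH. rewrite sin_id. reflexivity.
Qed.

Lemma to_sinh_length nn : length (to_sinh nn) = (2 * length nn)%nat.
Proof. induction nn as [|[[a w] b] t IH]; simpl; [reflexivity|]. rewrite IH. lia. Qed.

Lemma to_sin_length nn : length (to_sin nn) = length nn.
Proof. induction nn as [|[[a w] b] t IH]; simpl; [reflexivity|]. rewrite IH. lia. Qed.

Lemma Cmod_mCi a : Cmod (Cmult (Copp Ci) a) = Cmod a.
Proof. rewrite Cmod_mult, Cmod_opp, Cmod_Ci. ring. Qed.

Lemma to_sinh_bounded nn M : weights_bounded nn M -> List.Forall (fun n : C * C * C => snd n = RtoC 0) nn ->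
  PI / 2 <= M -> weights_bounded (to_sinh nn) M.
Proof.
  intros H H0 HM. induction nn as [|[[a w] b] t IH]; simpl; [constructor|].
  inversion H as [|? ? [Ha [Hw Hb]] Ht]; subst. inversion H0 as [|? ? Hb0 Ht0]; subst. simpl in *.
  constructor; [simpl; auto|]. constructor.
  - simpl. rewrite Cmod_mCi. repeat split; auto. subst. rewrite Cplus_0_l, iPI2.
    unfold Cmod; simpl. replace (0 * (0 * 1) + PI / 2 * (PI / 2 * 1)) with ((PI / 2) ^ 2) by ring.
    rewrite sqrt_pow2; [lra|]. pose proof PI_RGT_0. lra.
  - apply IH; auto.
Qed.

Lemma to_sin_bounded nn M : weights_bounded nn M -> weights_bounded (to_sin nn) M.
Proof.
  intros H. induction nn as [|[[a w] b] t IH]; simpl; [constructor|].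
  inversion H as [|? ? [Ha [Hw Hb]] Ht]; subst. simpl in *.
  constructor; [|apply IH; auto]. simpl. rewrite Cmod_mCi, !Cmod_mult, Cmod_Ci, !Rmult_1_l. auto.
Qed.

Lemma weights_mono nn M M' : M <= M' -> weights_bounded nn M -> weights_bounded nn M'.
Proof.
  intros HM H. unfold weights_bounded in *. eapply Forall_impl; [|exact H].
  intros x [H1 [H2 H3]]. repeat split; lra.
Qed.


Lemma exp_net_all k J : 2 * exp 1 * INR k < INR J ->
  exists nn : list (C * C * C), (length nn <= J)%nat /\ weights_bounded nn (INR (S k)) /\
    List.Forall (fun n : C * C * C => snd n = RtoC 0) nn /\
    forall xi, Cmod xi <= 2 ->
      Cmod (Cminus (shallow_net Cexp nn xi) (pow_n xi k)) <= 2 * (2 * exp 1 * INR k / INR J) ^ J.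
Proof.
  intros Hr. destruct k as [|k'].
  - assert (HJ : (1 <= J)%nat) by (simpl in Hr; apply (INR_lt 0 J) in Hr ||
                (assert (0 < INR J) by lra; apply INR_lt; simpl; lra); lia).
    exists ((RtoC 1, RtoC 0, RtoC 0) :: nil). split; [simpl; lia|]. split.
    { constructor; [|constructor]. simpl. rewrite Cmod_1, Cmod_0. lra. }
    split; [constructor; [reflexivity|constructor]|].
    intros xi _. unfold shallow_net. simpl fold_right. rewrite pow_n_Cpow.
    replace (Cplus (Cmult (RtoC 0) xi) (RtoC 0)) with (RtoC 0) by ring. rewrite Cexp_0.
    replace (Cminus (Cplus (Cmult (RtoC 1) (RtoC 1)) (RtoC 0)) (Cpow xi 0)) with (RtoC 0) by (simpl; ring).
    rewrite Cmod_0. destruct J as [|j]; [lia|]. simpl. lra.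
  - destruct (exp_net (S k') J ltac:(lia) Hr) as [nn [Hl [Hw [H0 He]]]].
    exists nn. split; [lia|]. auto.
Qed.

Theorem lemma2 :
  forall s : activation,
  exists (Cn Cw : R), 0 < Cn /\ 0 < Cw /\
  forall k J : nat,
    2 * exp 1 * INR k < INR J ->
    exists nn : list (C * C * C),
      INR (length nn) <= Cn * INR J /\
      weights_bounded nn (Cw * INR (S k)) /\
      forall xi : C, Cmod xi <= 2 ->
        Cmod (Cminus (shallow_net (act s) nn xi) (pow_n xi k))
          <= 2 * (2 * exp 1 * INR k / INR J) ^ J.
Proof.
  intros s. exists 2, 2. split; [lra|]. split; [lra|].
  intros k J Hr.
  destruct (exp_net_all k J Hr) as [nn [Hl [Hw [H0 He]]]].
  assert (HS : 1 <= INR (S k)) by (rewrite S_INR; pose proof (pos_INR k); lra).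
  assert (HPI : PI / 2 <= 2 * INR (S k)) by (pose proof PI_4; lra).
  assert (Hw2 : weights_bounded nn (2 * INR (S k))) by (eapply weights_mono; [|exact Hw]; lra).
  assert (HlJ : INR (length nn) <= INR J) by (apply le_INR; exact Hl).
  assert (HJ0 : 0 <= INR J) by apply pos_INR.
  destruct s; simpl act.
  - exists nn. split; [lra|]. split; assumption.
  - exists (to_sinh nn). split.
    { rewrite to_sinh_length, mult_INR. simpl (INR 2). lra. }
    split; [apply to_sinh_bounded; assumption|].
    intros xi Hxi. rewrite to_sinh_eval. apply He; exact Hxi.
  - exists (to_sin (to_sinh nn)). split.
    { rewrite to_sin_length, to_sinh_length, mult_INR. simpl (INR 2). lra. }
    split; [apply to_sin_bounded, to_sinh_bounded; assumption|].
    intros xi Hxi. rewrite to_sin_eval, to_sinh_eval. apply He; exact Hxi.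
Qed.
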